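(* Suppose the weight function $w$ satisfies $0<m\le w\le M$ almost everywhere. Then there exists an absolute constant $C>0$ such that for every $n\ge1$ and every $-1<x<1$, $$\lambda_x(-1)\le C\frac{M^2}{m}\cdot\frac{1}{n^2}\quad\text{and}\quad\lambda_x(1)\le C\frac{M^2}{m}\cdot\frac1{n^2}.$$
   Context: A weight function is a non-negative integrable function $w$ on $[-1,1]$ with nonzero integral. Fix $n\ge1$. Let $\varphi$ be the orthonormal polynomial of degree $n$ with positive leading coefficient w.r.t. $w(t)\,dt$ on $[-1,1]$ and $\psi$ the orthonormal polynomial of degree $n-1$ with positive leading coefficient w.r.t. $(1-t^2)w(t)\,dt$. For real $a$ let $P_a(t)=\varphi(t)-a(1-t)\psi(t)$ if $a\ge0$, $P_a(t)=\varphi(t)-a(1+t)\psi(t)$ if $a\le0$; its zeros are $-1<\xi_1(a)<\dots<\xi_n(a)<1$. The zeros of $(1-t^2)\psi(t)$ are $-1=\eta_0<\eta_1<\dots<\eta_n=1$. The following node sets each carry a unique quadrature formula with positive weights exact for all polynomials of degree $\le 2n-1$ with respect to $w$: $\{\xi_i(0)\}_{i=1}^n$; $\{\eta_0,\dots,\eta_n\}$; $\{-1\}\cup\{\xi_i(a)\}_i$ for $0<a<\infty$; $\{\xi_i(a)\}_i\cup\{1\}$ for $-\infty<a<0$. Each $x\in(-1,1)$ is a node of exactly one of them, denoted $\Sigma_x$; $\lambda_x(u)$ is the weight of $u$ in $\Sigma_x$ (and $0$ if $u$ is not a node of $\Sigma_x$). *)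

(* Defs.v *)
From HB Require Import structures.
From mathcomp Require Import all_boot all_order all_algebra.
From mathcomp Require Import all_classical all_reals all_analysis.
Set Implicit Arguments.
Unset Strict Implicit.
Unset Printing Implicit Defensive.
Import Order.TTheory GRing.Theory Num.Theory.
Import numFieldNormedType.Exports.
Local Open Scope classical_set_scope.
Local Open Scope ring_scope.

Section Defs.
Variable R : realType.

Definition I11 : set R := `[(-1)%R, 1%R]%classic.

Definition int11 (f : R -> R) : R := \int[@lebesgue_measure R]_(t in I11) f t.

Definition weight_fun (w : R -> R) : Prop :=
  (forall t, I11 t -> 0 <= w t) /\
  (@lebesgue_measure R).-integrable I11 (fun t => (w t)%:E) /\
  int11 w != 0.

Definition ip (v : R -> R) (p q : {poly R}) : R :=
  int11 (fun t => v t * p.[t] * q.[t]).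

Definition orthonormal_poly (v : R -> R) (k : nat) (p : {poly R}) : Prop :=
  size p = k.+1 /\ 0 < lead_coef p /\
  (forall q : {poly R}, (size q <= k)%N -> ip v p q = 0) /\
  ip v p p = 1.

Definition Pa (phi psi : {poly R}) (a : R) : {poly R} :=
  if 0 <= a then phi - a *: ((1 - 'X) * psi)
  else phi - a *: ((1 + 'X) * psi).

Definition zeros (p : {poly R}) : set R := [set t | root p t].

Definition quadrature (w : R -> R) (n : nat) (S : set R) (lam : R -> R) : Prop :=
  (forall u, S u -> 0 < lam u) /\
  (forall u, ~ S u -> lam u = 0) /\
  (forall p : {poly R}, (size p <= n.*2)%N ->
     int11 (fun t => w t * p.[t]) = \sum_(u \in S) lam u * p.[u]).

Definition family_nodes (phi psi : {poly R}) (S : set R) : Prop :=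
  S = zeros phi \/
  S = zeros ((1 - 'X ^+ 2) * psi) \/
  (exists a, 0 < a /\ S = [set -1] `|` zeros (Pa phi psi a)) \/
  (exists a, a < 0 /\ S = zeros (Pa phi psi a) `|` [set 1]).

Definition family_quadrature (w : R -> R) (n : nat) (phi psi : {poly R})
    (S : set R) (lam : R -> R) : Prop :=
  family_nodes phi psi S /\ quadrature w n S lam.

End Defs.

(* Main.v *)
Require Import Defs.
From HB Require Import structures.
From mathcomp Require Import all_boot all_order all_algebra.
From mathcomp Require Import all_classical all_reals all_analysis.
From mathcomp Require Import ring lra zify measurable_realfun.
Import Order.TTheory GRing.Theory Num.Theory.
Import numFieldNormedType.Exports.
Local Open Scope classical_set_scope.
Local Open Scope ring_scope.

Section Cheb.
Variable R : realType.

Fixpoint Tpair (k : nat) : {poly R} * {poly R} :=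
  match k with
  | 0 => (1, 'X)
  | k'.+1 => ((Tpair k').2, 2%:R *: 'X * (Tpair k').2 - (Tpair k').1)
  end.
Definition Tch k := (Tpair k).1.

Lemma Tch0 : Tch 0 = 1. Proof. by []. Qed.
Lemma Tch1 : Tch 1 = 'X. Proof. by []. Qed.
Lemma TchSS k : Tch k.+2 = 2%:R *: 'X * Tch k.+1 - Tch k.
Proof. by []. Qed.

Lemma TchE x k : (Tch k.+2).[x] = 2 * x * (Tch k.+1).[x] - (Tch k).[x].
Proof. by rewrite TchSS !hornerE. Qed.

Lemma size_Tch k : (size (Tch k) <= k.+1)%N.
Proof.
have H : forall k, (size (Tch k) <= k.+1)%N /\ (size (Tch k.+1) <= k.+2)%N.
  elim=> [|j [IH1 IH2]]; first by rewrite Tch0 Tch1 size_polyX size_poly1.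
  split=> //; rewrite TchSS.
  apply: (leq_trans (size_polyD _ _)); rewrite geq_max; apply/andP; split.
    apply: (leq_trans (size_polyMleq _ _)).
    have h1 := size_scale_leq 2%:R ('X : {poly R}); rewrite size_polyX in h1.
    move: IH2 h1; set a := size _; set b := size _; move=> h2 h1.
    lia.
  rewrite size_polyN; move: IH1; move: (size _) => a; lia.
by case: (H k).
Qed.

Lemma Tch_inv x k : ((Tch k.+1).[x])^+2 - 2 * x * (Tch k.+1).[x] * (Tch k).[x]
   + ((Tch k).[x])^+2 = 1 - x^+2.
Proof.
elim: k => [|k IH]; first by rewrite Tch0 Tch1 !hornerE; ring.
rewrite TchE -IH; ring.
Qed.

Lemma Tch_pm x k : x ^+ 2 = 1 -> (Tch k).[x] = x ^+ k.
Proof.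
move=> x2.
have H : forall k, (Tch k).[x] = x ^+ k /\ (Tch k.+1).[x] = x ^+ k.+1.
  elim=> [|j [IH1 IH2]]; first by rewrite Tch0 Tch1 !hornerE expr1.
  split=> //; rewrite TchE IH1 IH2.
  apply/eqP; rewrite -subr_eq0; apply/eqP.
  have -> : 2 * x * x ^+ j.+1 - x ^+ j - x ^+ j.+2 = x^+j * (x^+2 - 1)
    by rewrite !exprS; ring.
  by rewrite x2 subrr mulr0.
by case: (H k).
Qed.

Lemma Tch_bound x k : -1 <= x <= 1 -> ((Tch k).[x])^+2 <= 1.
Proof.
move=> /andP[x1 x2].
have [x21|x21] := ltP (x^+2) 1.
  have := Tch_inv x k.
  set a := (Tch k.+1).[x]; set b := (Tch k).[x] => I.
  have E : (a - x * b)^+2 = (1 - x^+2) * (1 - b^+2).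
    apply/eqP; rewrite -subr_eq0; apply/eqP.
    have -> : (a - x * b)^+2 - (1 - x^+2) * (1 - b^+2) =
      (a ^+ 2 - 2 * x * a * b + b ^+ 2) - (1 - x^+2) by ring.
    by rewrite I subrr.
  have : 0 <= (1 - x^+2) * (1 - b^+2) by rewrite -E sqr_ge0.
  rewrite pmulr_rge0 ?subr_gt0 // subr_ge0 //.
have x2e : x^+2 = 1 by nra.
by rewrite Tch_pm // -exprM mulnC exprM x2e expr1n.
Qed.


Lemma natS (n : nat) : (n.+1)%:R = n%:R + 1 :> R.
Proof. by rewrite -addn1 natrD. Qed.

Lemma Tch_le1 x k : -1 <= x <= 1 -> -1 <= (Tch k).[x] <= 1.
Proof. move=> hx; have := Tch_bound x k hx; set t := _.[x] => h; apply/andP; split; nra. Qed.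

Lemma Tch_at1 k : (Tch k).[1] = 1.
Proof. by rewrite Tch_pm ?expr1n. Qed.

Definition Dch m : {poly R} := 2%:R *: \sum_(k < m.+1) Tch k - 1.
Definition Fch n : {poly R} := \sum_(m < n) Dch m.

Lemma Dch_ev x m : (Dch m).[x] = 2 * \sum_(k < m.+1) (Tch k).[x] - 1.
Proof. by rewrite /Dch hornerD hornerN hornerZ horner_sum hornerC. Qed.

Lemma Fch_ev x n : (Fch n).[x] = \sum_(m < n) (Dch m).[x].
Proof. by rewrite /Fch horner_sum. Qed.

Lemma Dch_id x m : (1 - x) * (Dch m).[x] = (Tch m).[x] - (Tch m.+1).[x].
Proof.
elim: m => [|m IH].
  by rewrite Dch_ev big_ord_recr big_ord0 /= Tch0 Tch1 !hornerE; ring.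
have E : (Dch m.+1).[x] = (Dch m).[x] + 2 * (Tch m.+1).[x].
  by rewrite !Dch_ev [in LHS]big_ord_recr /=; ring.
rewrite E mulrDr IH TchE; ring.
Qed.

Lemma Fch_id x n : (1 - x) * (Fch n).[x] = 1 - (Tch n).[x].
Proof.
elim: n => [|n IH]; first by rewrite Fch_ev big_ord0 Tch0 hornerC; ring.
rewrite Fch_ev big_ord_recr /= -Fch_ev mulrDr IH Dch_id; ring.
Qed.

Lemma Dch_le x m : -1 <= x <= 1 -> (Dch m).[x] <= 2 * m%:R + 1.
Proof.
move=> hx; rewrite Dch_ev.
have : \sum_(k < m.+1) (Tch k).[x] <= \sum_(k < m.+1) 1.
  by apply: ler_sum => k _; case/andP: (Tch_le1 x k hx).
rewrite sumr_const card_ord => h.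
have : (m.+1)%:R = m%:R + 1 :> R by rewrite -addn1 natrD.
move=> e; rewrite e in h; lra.
Qed.

Lemma Fch_le x n : -1 <= x <= 1 -> (Fch n).[x] <= n%:R ^+ 2.
Proof.
move=> hx; elim: n => [|n IH]; first by rewrite Fch_ev big_ord0 expr0n.
rewrite Fch_ev big_ord_recr /= -Fch_ev.
have := Dch_le x n hx; rewrite -addn1 natrD; move: IH; set a := n%:R; nra.
Qed.

Lemma Fch_ge0 x n : -1 <= x <= 1 -> 0 <= (Fch n).[x].
Proof.
move=> hx; have [x1|x1] := ltP x 1.
  have h := Fch_id x n; have := Tch_le1 x n hx.
  set t := (Tch n).[x]; set f := (Fch n).[x] => /andP[t1 t2].
  have : 0 <= (1 - x) * f by rewrite h subr_ge0.
  by rewrite pmulr_rge0 // subr_gt0.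
have -> : x = 1 by case/andP: hx => _ h; apply/le_anti; rewrite h x1.
elim: n => [|n IH]; first by rewrite Fch_ev big_ord0.
rewrite Fch_ev big_ord_recr /= -Fch_ev Dch_ev.
apply: addr_ge0 => //.
rewrite (eq_bigr (fun _ => 1)) => [|k _]; last exact: Tch_at1.
rewrite sumr_const card_ord -mulr_natl mulr1 natS.
have : 0 <= (n%:R : R) by rewrite ler0n.
lra.
Qed.

Lemma Fch_at1 n : (Fch n).[1] = n%:R ^+ 2.
Proof.
elim: n => [|n IH]; first by rewrite Fch_ev big_ord0 expr0n.
rewrite Fch_ev big_ord_recr /= -Fch_ev IH Dch_ev.
rewrite (eq_bigr (fun _ => 1)) => [|k _]; last exact: Tch_at1.
rewrite sumr_const card_ord -mulr_natl mulr1 !natS; ring.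
Qed.

Lemma size_Fch n : (size (Fch n) <= n)%N.
Proof.
rewrite /Fch; elim: n => [|n IH]; first by rewrite big_ord0 size_poly0.
rewrite big_ord_recr /=.
apply: (leq_trans (size_polyD _ _)); rewrite geq_max; apply/andP; split.
  by apply: (leq_trans IH).
rewrite /Dch; apply: (leq_trans (size_polyD _ _)); rewrite geq_max; apply/andP; split.
  apply: (leq_trans (size_scale_leq _ _)).
  apply: (leq_trans (size_sum _ _ _)).
  apply/bigmax_leqP => k _; apply: (leq_trans (size_Tch k)); exact: ltn_ord.
by rewrite size_polyN size_poly1.
Qed.

End Cheb.
Section G.
Variable R : realType.

Definition gfun (s c : R) (x : R) : R := 9 * ((1 + c * `|1 - s * x|) * (1 + c * `|1 - s * x|))^-1.

Lemma gfun_cont s c : 0 <= c -> continuous (gfun s c).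
Proof.
move=> c0 x.
have nz : (1 + c * `|1 - s * x|) * (1 + c * `|1 - s * x|) != 0.
  by rewrite mulf_neq0 // gt_eqF // ltr_pwDl // mulr_ge0.
apply: cvgM; first exact: cvg_cst.
apply: cvgV => //.
have h : (fun y => 1 + c * `|1 - s * y|) @ x --> 1 + c * `|1 - s * x|.
  apply: cvgD; first exact: cvg_cst.
  apply: cvgM; first exact: cvg_cst.
  apply: cvg_norm.
  apply: cvgB; first exact: cvg_cst.
  apply: cvgM; first exact: cvg_cst.
  exact: cvg_id.
exact: cvgM.
Qed.

Definition pa (s c : R) : {poly R} := (1 + c)%:P - (c * s) *: 'X.
Definition Ffun (s c : R) (y : R) : R := (9 * s / c) * ((pa s c).[y])^-1.

Lemma pa_ev (s c y : R) : (pa s c).[y] = 1 + c * (1 - s * y).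
Proof. rewrite /pa !hornerE; ring. Qed.

Lemma pa_pos (s c y : R) : (s = 1 \/ s = -1) -> 0 <= c -> -1 <= y <= 1 -> 0 < (pa s c).[y].
Proof.
move=> hs c0 /andP[y1 y2]; rewrite pa_ev.
have : 0 <= 1 - s * y by case: hs => ->; lra.
move=> h; have := mulr_ge0 c0 h; lra.
Qed.

Lemma Ffun_deriv (s c x : R) : (s = 1 \/ s = -1) -> 0 < c -> -1 < x < 1 ->
  is_derive x 1 (Ffun s c) (gfun s c x).
Proof.
move=> hs c0 /andP[x1 x2].
have nz : (pa s c).[x] != 0.
  by rewrite gt_eqF // pa_pos // ?ltW //; apply/andP; split; apply: ltW.
have D1 := is_deriveV nz (is_derive_poly (pa s c) x).
have D2 := @is_deriveZ _ _ _ _ (9 * s / c) x 1 _ D1.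
have -> : Ffun s c = (9 * s / c) \*: (fun y : R => (pa s c).[y]^-1).
  by apply/funext => y.
suff -> : gfun s c x = (9 * s / c) *: (- (pa s c).[x] ^- 2 *: (pa s c)^`().[x]) by [].
have dp : (pa s c)^`() = - (c * s)%:P.
  by rewrite /pa derivB derivC derivZ derivX sub0r alg_polyC.
rewrite dp hornerN hornerC /gfun.
have e : `|1 - s * x| = 1 - s * x.
  by rewrite ger0_norm //; case: hs => ->; lra.
rewrite e -(pa_ev s c x).
have s2 : s * s = 1 by case: hs => ->; ring.
rewrite /GRing.scale /= -expr2.
set P := (pa s c).[x].
have Pn : P != 0 by [].
have cn : c != 0 by rewrite gt_eqF.
rewrite -[in LHS](mulr1 9) -s2 mulrA.
field.
by rewrite Pn cn.
Qed.

Lemma Ffun_cont (s c x : R) : (s = 1 \/ s = -1) -> 0 <= c -> -1 <= x <= 1 ->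
  Ffun s c y @[y --> x] --> Ffun s c x.
Proof.
move=> hs c0 hx.
have nz : (pa s c).[x] != 0 by rewrite gt_eqF // pa_pos.
apply: cvgM; first exact: cvg_cst.
apply: cvgV => //.
exact: continuous_horner.
Qed.

Lemma int_gfun (s c : R) : (s = 1 \/ s = -1) -> 0 < c ->
 (\int[lebesgue_measure]_(x in `[(-1)%R, 1%R]) (gfun s c x)%:E <= (9 / c)%:E)%E.
Proof.
move=> hs c0.
rewrite (@continuous_FTC2 R (gfun s c) (Ffun s c) (-1) 1).
- rewrite -EFinD lee_fin /Ffun !pa_ev.
  have cn : c != 0 by rewrite gt_eqF.
  case: hs => ->.
    rewrite !(mulr1, mulrN1, subrr, mulr0, addr0, opprK, invr1).
    have h : 0 < (1 + c * (1 + 1))^-1 by rewrite invr_gt0; lra.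
    have : 0 < 9 / c by rewrite divr_gt0.
    nra.
  rewrite !(mulNr, mulN1r, mulr1, opprK, subrr, mulr0, addr0, invr1).
  have -> : 1 + c * (1 + 1 * -1) = 1 :> R by ring.
  rewrite invr1 mulr1.
  have h : 0 < (1 + c * (1 + 1))^-1 by rewrite invr_gt0; lra.
  have K0 : 0 < 9 / c by rewrite divr_gt0.
  set D := (1 + c * (1 + 1))^-1 in h *.
  have -> : 9 * -1 / c * D - 9 * -1 / c = 9 / c - 9 / c * D by ring.
  nra.
- lra.
- apply: continuous_subspaceT; apply: gfun_cont; exact: ltW.
- split.
  + move=> x; rewrite in_itv /= => hx.
    by case: (@Ffun_deriv s c x hs c0 hx).
  + apply: cvg_at_right_filter; apply: Ffun_cont => //; [exact: ltW|lra].
  + apply: cvg_at_left_filter; apply: Ffun_cont => //; [exact: ltW|lra].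
- move=> x; rewrite in_itv /= => hx.
  by rewrite derive1E; apply: derive_val; apply: (@Ffun_deriv s c x hs c0 hx).
Qed.
End G.

Section Main.
Variable R : realType.
Notation mu := (@lebesgue_measure R).

Lemma sq_bound (f a : R) : 0 <= f -> f <= 1 -> 0 <= a -> a * f <= 2 ->
  f * f <= 9 * ((1 + a) * (1 + a))^-1.
Proof.
move=> f0 f1 a0 af.
have P : 0 < (1 + a) * (1 + a) by apply: mulr_gt0; lra.
rewrite ler_pdivlMr //.
have h : f * (1 + a) <= 3 by nra.
have h' : 0 <= f * (1 + a) by nra.
nra.
Qed.

Lemma fine_le (e : \bar R) (r : R) : (0 <= e)%E -> (e <= r%:E)%E -> fine e <= r.
Proof. by case: e => //= x _; rewrite lee_fin. Qed.

Lemma mpoly (p : {poly R}) (A : set R) : measurable_fun A (horner p).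
Proof.
apply/measurable_funTS; apply: continuous_measurable_fun.
exact/continuous_horner.
Qed.


Definition qpol (n : nat) (s : R) : {poly R} :=
  (n%:R ^+ 2)^-1 *: (Fch R n \Po (s *: 'X)).

Lemma qpol_ev n s t : (qpol n s).[t] = (Fch R n).[s * t] / n%:R ^+ 2.
Proof. by rewrite /qpol hornerZ horner_comp hornerZ hornerX mulrC. Qed.

Lemma size_qpol n s : (1 <= n)%N -> (size (qpol n s) <= n)%N.
Proof.
move=> n1; rewrite /qpol; apply: (leq_trans (size_scale_leq _ _)).
apply: (leq_trans (size_comp_poly_leq _ _)).
have h1 := size_Fch R n.
have h2 := size_scale_leq s ('X : {poly R}); rewrite size_polyX in h2.
move: h1 h2; move: (size (Fch R n)) (size (s *: 'X)) => a b h1 h2.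
nia.
Qed.

Lemma qpol_bound n s t : (1 <= n)%N -> (s = 1 \/ s = -1) -> -1 <= t <= 1 ->
  (qpol n s).[t] * (qpol n s).[t] <= gfun R s (n%:R ^+ 2) t.
Proof.
move=> n1 hs ht.
have hy : -1 <= s * t <= 1 by case: hs => ->; move: ht => /andP[? ?]; apply/andP; split; lra.
have c0 : 0 < n%:R ^+ 2 :> R by rewrite exprn_gt0 // ltr0n.
have F0 := Fch_ge0 R (s * t) n hy; have F1 := Fch_le R (s * t) n hy; have Fi := Fch_id R (s * t) n.
have T1 := Tch_le1 R (s * t) n hy.
rewrite /gfun qpol_ev.
have e : `|1 - s * t| = 1 - s * t by rewrite ger0_norm //; move: hy => /andP[_ ?]; lra.
rewrite e.
set c := n%:R ^+ 2 in c0 F1 *; set F := (Fch R n).[s * t] in F0 F1 Fi *.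
set T := (Tch R n).[s * t] in Fi T1.
apply: sq_bound.
- by rewrite divr_ge0 // ltW.
- by rewrite ler_pdivrMr // mul1r.
- apply: mulr_ge0; first exact: ltW.
  by move: hy => /andP[_ ?]; rewrite subr_ge0.
- have -> : c * (1 - s * t) * (F / c) = (1 - s * t) * F.
    by field; rewrite gt_eqF.
  rewrite Fi; move: T1 => /andP[? ?]; lra.
Qed.

Lemma qpol_at n s : (1 <= n)%N -> (s = 1 \/ s = -1) -> (qpol n s).[s] = 1.
Proof.
move=> n1 hs; rewrite qpol_ev.
have -> : s * s = 1 by case: hs => ->; ring.
by rewrite Fch_at1 divff // gt_eqF // exprn_gt0 // ltr0n.
Qed.

Lemma endpoint (w : R -> R) (M : R) (n : nat) (S : set R) (lam : R -> R) (s : R) :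
  weight_fun w -> 0 <= M ->
  {ae mu, forall t, I11 t -> w t <= M} ->
  (1 <= n)%N -> quadrature w n S lam -> (s = 1 \/ s = -1) ->
  lam s <= 9 * M / n%:R ^+ 2.
Proof.
move=> [w0 [wint wnz]] M0 hae n1 [lpos [lzero quad]] hs.
have c0 : 0 < n%:R ^+ 2 :> R by rewrite exprn_gt0 // ltr0n.
have [Ss|nSs] := pselect (S s); last first.
  by rewrite lzero // mulr_ge0 // ?mulr_ge0 // invr_ge0 ltW.
have finS : finite_set S.
  apply: contrapT => infS.
  have := quad 1; rewrite size_poly1 => /(_ ltac:(lia)).
  rewrite fsbig_dflt.
    have -> : (fun t => w t * 1.[t]) = w by apply/funext => t; rewrite hornerC mulr1.
    by move/eqP: wnz.
  have -> : S `&` (fun u => lam u * 1.[u]) @^-1` [set~ 0] = S.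
    apply/seteqP; split => [u [] //|u Su]; split => //=.
    by rewrite hornerC mulr1; apply/eqP; rewrite gt_eqF // lpos.
  exact: infS.
pose p := qpol n s * qpol n s.
have sp : (size p <= n.*2)%N.
  apply: (leq_trans (size_polyMleq _ _)).
  have := @size_qpol n s n1; move: (size (qpol n s)) => a; lia.
have pev t : p.[t] = (qpol n s).[t] * (qpol n s).[t] by rewrite hornerM.
have Q := quad p sp.
have L : lam s <= \sum_(u \in S) lam u * p.[u].
  rewrite (fsbigD1 s) // pev qpol_at // !mulr1 lerDl.
  apply: fsumr_ge0 => u [Su _]; rewrite pev; apply: mulr_ge0.
    exact/ltW/lpos.
  by rewrite -expr2 sqr_ge0.
rewrite -Q in L; apply: (le_trans L).
set c := n%:R ^+ 2 in c0 *.
have mI : measurable (I11 (R:=R)) by exact: measurable_itv.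
have p0 t : 0 <= p.[t] by rewrite pev -expr2 sqr_ge0.
have pg t : I11 t -> p.[t] <= gfun R s c t.
  move=> It; rewrite pev; apply: qpol_bound => //.
have mw : measurable_fun (I11 (R:=R)) w.
  by move/integrableP: wint => [/measurable_EFinP mw _].
have g0 t : 0 <= gfun R s c t.
  have h : 0 <= 1 + c * `|1 - s * t| by rewrite addr_ge0 // mulr_ge0 // ltW.
  by rewrite /gfun mulr_ge0 // invr_ge0 mulr_ge0.
rewrite /int11 /Rintegral; apply: fine_le.
  apply: integral_ge0 => t It; rewrite lee_fin; apply: mulr_ge0 => //; exact: w0.
apply: (@le_trans _ _ (\int[mu]_(x in I11 (R:=R)) ((M * gfun R s c x)%:E))%E).
  apply: ae_ge0_le_integral => //.
  - move=> t It; rewrite lee_fin; apply: mulr_ge0 => //; exact: w0.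
  - apply/measurable_EFinP; apply: measurable_funM => //; exact: measurable_poly.
  - by move=> t It; rewrite lee_fin mulr_ge0.
  - apply/measurable_EFinP; apply: measurable_funM => //.
    apply: measurable_funTS; apply: continuous_measurable_fun.
    by apply: gfun_cont; apply: ltW.
  - case: hae => N [mN muN sub]; exists N; split => // t /= nP; apply: sub => /= h.
    apply: nP => It; rewrite lee_fin.
    have := h It; have := w0 t It; have := pg t It; have := p0 t; nra.
under eq_integral do rewrite EFinM.
rewrite ge0_integralZl_EFin //; last first.
  - apply/measurable_EFinP; apply: measurable_funTS; apply: continuous_measurable_fun.
    by apply: gfun_cont; apply: ltW.
  - by move=> t It; rewrite lee_fin.
apply: (@le_trans _ _ (M%:E * (9 / c)%:E))%E.
  by apply: lee_wpmul2l; rewrite ?lee_fin //; exact: int_gfun.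
by rewrite -EFinM lee_fin mulrA (mulrC M).
Qed.

End Main.

Theorem lemma3p7 (R : realType) :
  exists C : R, 0 < C /\
  forall (w : R -> R) (m M : R),
    weight_fun w -> 0 < m ->
    {ae @lebesgue_measure R, forall t, I11 t -> m <= w t <= M} ->
    forall (n : nat), (1 <= n)%N ->
    forall phi psi : {poly R},
      orthonormal_poly w n phi ->
      orthonormal_poly (fun t => (1 - t ^+ 2) * w t) n.-1 psi ->
    forall x : R, -1 < x < 1 ->
    forall (S : set R) (lam : R -> R),
      family_quadrature w n phi psi S lam -> S x ->
      lam (-1) <= C * (M ^+ 2 / m) * (1 / (n%:R ^+ 2)) /\
      lam 1 <= C * (M ^+ 2 / m) * (1 / (n%:R ^+ 2)).
Proof.
exists 9; split; first by [].
move=> w m M hw m0 hae n n1 phi psi _ _ x _ S lam [_ hq] _.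
have mM : m <= M.
  rewrite leNgt; apply/negP => Mm.
  case: (hae) => N [mN muN sub].
  have IN : I11 (R:=R) `<=` N.
    move=> t It; apply: sub => /= h; have := h It; move=> /andP[h1 h2]; lra.
  have := le_measure (@lebesgue_measure R) _ _ IN.
  move=> /(_ (mem_set (measurable_itv _)) (mem_set mN)).
  move: muN => /= ->.
  rewrite /I11 lebesgue_measure_itv /= lte_fin (_ : -1 < 1) ?ltrN11 //. rewrite opprK -EFinD lee_fin; lra.
have M0 : 0 <= M by lra.
have hae' : {ae @lebesgue_measure R, forall t, I11 t -> w t <= M}.
  case: (hae) => N [mN muN sub]; exists N; split => // t /= nP; apply: sub => /= h.
  by apply: nP => It; case/andP: (h It).
have c0 : 0 < n%:R ^+ 2 :> R by rewrite exprn_gt0 // ltr0n.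
have key : 9 * M / n%:R ^+ 2 <= 9 * (M ^+ 2 / m) * (1 / n%:R ^+ 2).
  have h : M <= M ^+ 2 / m by rewrite ler_pdivlMr // expr2 ler_wpM2l.
  rewrite mul1r mulrA; apply: ler_wpM2r; first by rewrite invr_ge0 ltW.
  by rewrite -mulrA; apply: ler_wpM2l.
split; apply: le_trans key.
  by apply: (@endpoint R w M n S lam (-1)) => //; right.
by apply: (@endpoint R w M n S lam 1) => //; left.
Qed.
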